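(* Let $R$ be a $\sigma$-(sps) Armendariz ring, where $\sigma$ is an endomorphism of $R$. The following are equivalent: (1) $R$ is reversible; (2) $R$ is $\sigma$-reversible; (3) $R$ is right $\sigma$-reversible; (4) $R[[x;\sigma]]$ is reversible. Likewise, the following are equivalent: (1') $R$ is symmetric; (2') $R$ is $\sigma$-symmetric; (3') $R$ is right $\sigma$-symmetric; (4') $R[[x;\sigma]]$ is symmetric.
   Context: All rings are associative with identity; $\sigma$ denotes a nonzero, non-identity ring endomorphism of $R$. The skew power series ring $R[[x;\sigma]]$ consists of all formal series $\sum_{i=0}^\infty a_i x^i$ with $a_i\in R$, added termwise and multiplied using distributivity and the rule $xa=\sigma(a)x$ for $a\in R$. A ring $R$ is $\sigma$-(sps) Armendariz if whenever $p=\sum_{i=0}^\infty a_ix^i$ and $q=\sum_{j=0}^\infty b_jx^j$ in $R[[x;\sigma]]$ satisfy $pq=0$, then $a_ib_j=0$ for all $i,j$. A ring $S$ is reversible if $ab=0$ implies $ba=0$; symmetric if $abc=0$ implies $acb=0$. $R$ is right $\sigma$-reversible if $ab=0$ implies $b\sigma(a)=0$ for $a,b\in R$; left $\sigma$-reversible if $ab=0$ implies $\sigma(b)a=0$; $\sigma$-reversible if both. $R$ is right $\sigma$-symmetric if $abc=0$ implies $ac\sigma(b)=0$ for $a,b,c\in R$; left $\sigma$-symmetric if $abc=0$ implies $\sigma(b)ac=0$; $\sigma$-symmetric if both. *)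

(* Defs.v *)
From HB Require Import structures.
From mathcomp Require Import all_boot all_order all_algebra.
Set Implicit Arguments. Unset Strict Implicit. Unset Printing Implicit Defensive.
Import GRing.Theory.
Local Open Scope ring_scope.

(* Skew power series ring R[[x;sigma]]: a series sum a_i x^i is its
   coefficient function nat -> R.  Using x b = sigma(b) x, one gets
   (sum a_i x^i)(sum b_j x^j) = sum_n (sum_{i<=n} a_i sigma^i(b_{n-i})) x^n. *)
Definition spseries (R : nzRingType) := nat -> R.

Definition spzero (R : nzRingType) : spseries R := fun _ => 0.

Definition spmul (R : nzRingType) (s : R -> R) (p q : spseries R) : spseries R :=
  fun n => \sum_(i < n.+1) p i * iter i s (q (n - i)%N).

Definition sps_Armendariz (R : nzRingType) (s : R -> R) : Prop :=
  forall p q : spseries R, spmul s p q = spzero R ->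
    forall i j : nat, p i * q j = 0.

Definition reversible (R : nzRingType) : Prop :=
  forall a b : R, a * b = 0 -> b * a = 0.
Definition symmetric_ring (R : nzRingType) : Prop :=
  forall a b c : R, a * b * c = 0 -> a * c * b = 0.

Definition right_sigma_reversible (R : nzRingType) (s : R -> R) : Prop :=
  forall a b : R, a * b = 0 -> b * s a = 0.
Definition left_sigma_reversible (R : nzRingType) (s : R -> R) : Prop :=
  forall a b : R, a * b = 0 -> s b * a = 0.
Definition sigma_reversible (R : nzRingType) (s : R -> R) : Prop :=
  right_sigma_reversible s /\ left_sigma_reversible s.

Definition right_sigma_symmetric (R : nzRingType) (s : R -> R) : Prop :=
  forall a b c : R, a * b * c = 0 -> a * c * s b = 0.
Definition left_sigma_symmetric (R : nzRingType) (s : R -> R) : Prop :=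
  forall a b c : R, a * b * c = 0 -> s b * a * c = 0.
Definition sigma_symmetric (R : nzRingType) (s : R -> R) : Prop :=
  right_sigma_symmetric s /\ left_sigma_symmetric s.

Definition sps_reversible (R : nzRingType) (s : R -> R) : Prop :=
  forall p q : spseries R, spmul s p q = spzero R -> spmul s q p = spzero R.
Definition sps_symmetric (R : nzRingType) (s : R -> R) : Prop :=
  forall p q r : spseries R, spmul s (spmul s p q) r = spzero R ->
    spmul s (spmul s p r) q = spzero R.

(* Main.v *)
Require Import Defs.
From HB Require Import structures.
From mathcomp Require Import all_boot all_order all_algebra.
From Stdlib Require Import FunctionalExtensionality.
Import GRing.Theory.
Local Open Scope ring_scope.

Definition Cst (R : nzRingType) (x : R) : spseries R :=
  fun n => if n is 0%N then x else 0.

Arguments Cst {R}.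
Lemma iter0s (R : nzRingType) (s : {rmorphism R -> R}) n : iter n s 0 = 0.
Proof. elim: n => //= n ->; exact: rmorph0. Qed.

Lemma spmulC (R : nzRingType) (s : {rmorphism R -> R}) (a : R) (q : spseries R) :
  spmul s (Cst a) q = fun n => a * q n.
Proof.
apply: functional_extensionality => n.
rewrite /spmul big_ord_recl /= big1 ?addr0; first by congr (_ * q _); exact: subn0.
move=> i _.
by rewrite /Cst /= mul0r.
Qed.

Fixpoint altq (R : nzRingType) (s : R -> R) (b : R) (n : nat) : R :=
  if n is m.+1 then - s (altq R s b m) else b.
Arguments altq {R}.

Lemma Lsig (R : nzRingType) (s : {rmorphism R -> R}) (HA : sps_Armendariz s)
  (a b : R) : a * b = 0 -> a * s b = 0.
Proof.
move=> ab.
pose p : spseries R := fun n => if (n <= 1)%N then a else 0.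
have H : spmul s p (altq s b) = spzero R.
  apply: functional_extensionality => n; rewrite /spmul /spzero.
  case: n => [|m]; first by rewrite big_ord_recl big_ord0 /= addr0.
  rewrite big_ord_recl big_ord_recl big1 ?addr0.
    rewrite /p /= mulrN; have -> : (m.+1 - bump 0 0)%N = m by rewrite /bump /= subn1.
    by rewrite addNr.
  by move=> i _; rewrite /p /= mul0r.
have := HA _ _ H 0%N 1%N; rewrite /p /= mulrN => /eqP.
by rewrite oppr_eq0 => /eqP.
Qed.

Lemma Liter (R : nzRingType) (s : {rmorphism R -> R}) (HA : sps_Armendariz s)
  (a b : R) n : a * b = 0 -> a * iter n s b = 0.
Proof. move=> ab; elim: n => //= n IH; exact: Lsig. Qed.

Lemma Msig (R : nzRingType) (s : {rmorphism R -> R}) (HA : sps_Armendariz s)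
  (a b : R) : a * s b = 0 -> a * b = 0.
Proof.
move=> ab.
pose p : spseries R := fun n => if n == 1%N then a else 0.
have H : spmul s p (Cst b) = spzero R.
  apply: functional_extensionality => n; rewrite /spmul /spzero.
  apply: big1 => -[[|[|i]] Hi] _ /=; rewrite /p /= ?mul0r //.
  case: n Hi => [|[|n]] //= _; by rewrite rmorph0 mulr0.
exact: (HA _ _ H 1%N 0%N).
Qed.

Arguments Lsig {R s}.
Arguments Liter {R s}.
Arguments Msig {R s}.

Lemma CstM (R : nzRingType) (a b : R) : (fun n => a * Cst b n) = Cst (a * b).
Proof. apply: functional_extensionality => -[|n] //=; exact: mulr0. Qed.

Lemma sym_rev (R : nzRingType) : symmetric_ring R -> reversible R.
Proof. move=> S a b ab; have := S 1 a b; rewrite !mul1r; exact. Qed.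

Lemma Lsym (R : nzRingType) (s : {rmorphism R -> R}) (HA : sps_Armendariz s)
  (S : symmetric_ring R) (x y z : R) m k :
  x * y * z = 0 -> x * iter m s y * iter k s z = 0.
Proof.
move=> /S /(Liter HA _ _ m) /S /(Liter HA _ _ k).
by [].
Qed.

Arguments Lsym {R s}.

Theorem theorem2p7 (R : nzRingType) (s : {rmorphism R -> R})
  (s_nonzero : exists a : R, s a != 0) (s_nonid : exists a : R, s a != a)
  (HA : sps_Armendariz s) :
  ((reversible R <-> sigma_reversible s) /\
   (reversible R <-> right_sigma_reversible s) /\
   (reversible R <-> sps_reversible s)) /\
  ((symmetric_ring R <-> sigma_symmetric s) /\
   (symmetric_ring R <-> right_sigma_symmetric s) /\
   (symmetric_ring R <-> sps_symmetric s)).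
Proof.
have rev_r : reversible R -> right_sigma_reversible s.
  by move=> Rv a b /Rv /(Lsig HA).
have r_rev : right_sigma_reversible s -> reversible R.
  by move=> Rs a b /Rs /(Msig HA).
have rev_l : reversible R -> left_sigma_reversible s.
  by move=> Rv a b /(Lsig HA) /Rv.
have sym_r : symmetric_ring R -> right_sigma_symmetric s.
  by move=> S a b c /S /(Lsig HA).
have r_sym : right_sigma_symmetric s -> symmetric_ring R.
  by move=> Rs a b c /Rs /(Msig HA).
have sym_l : symmetric_ring R -> left_sigma_symmetric s.
  move=> S a b c /S /(Lsig HA) /(@sym_rev R S _ _).
  by rewrite mulrA.
split; split.
- split; first by move=> Rv; split; [exact: rev_r | exact: rev_l].
  by case=> /r_rev.
split; first by split; [exact: rev_r | exact: r_rev].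
split.
- move=> Rv p q H; apply: functional_extensionality => n; rewrite /spmul /spzero.
  apply: big1 => i _; apply: Liter => //; apply: Rv; exact: HA H _ _.
- move=> Sr a b ab.
  have H : spmul s (Cst a) (Cst b) = spzero R.
    by rewrite spmulC CstM; apply: functional_extensionality => -[|n] //=.
  have := Sr _ _ H; rewrite spmulC CstM => /(congr1 (fun f => f 0%N)) /=.
  by [].
- split; first by move=> S; split; [exact: sym_r | exact: sym_l].
  by case=> /r_sym.
split; first by split; [exact: sym_r | exact: r_sym].
split.
- move=> S p q r H.
  have Rv := @sym_rev R S.
  have H1 : forall i j, spmul s p q i * r j = 0 by move=> i j; exact: HA H i j.
  have H2 : forall j, spmul s (fun k => r j * p k) q = spzero R.
    move=> j; apply: functional_extensionality => n; rewrite /spmul /spzero.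
    under eq_bigr do rewrite -mulrA.
    rewrite -mulr_sumr; apply: Rv; exact: H1.
  have H3 : forall j k l, p k * r j * q l = 0.
    move=> j k l; have := HA _ _ (H2 j) k l.
    by rewrite /= -mulrA => /Rv /S.
  apply: functional_extensionality => n; rewrite /spmul /spzero.
  apply: big1 => m _; rewrite mulr_suml; apply: big1 => k _.
  exact: (Lsym HA S _ _ _ k m (H3 _ _ _)).
- move=> Sr a b c abc.
  have H : spmul s (spmul s (Cst a) (Cst b)) (Cst c) = spzero R.
    rewrite !spmulC !CstM spmulC CstM.
    by apply: functional_extensionality => -[|n] //=.
  have := Sr _ _ _ H; rewrite !spmulC !CstM spmulC CstM.
  by move=> /(congr1 (fun f => f 0%N)) /=.
Qed.
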